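(* Let $C$ be a projective completely regular linear code in $\mathbb{F}_q^n$ (the Hamming space $H(n,q)$) with covering radius $\rho$, and for $0\le i\le\rho$ let $d_i$ be the number of cosets of $C$ of weight $i$. Then $d_i^2\ge d_{i-1}d_{i+1}$ for all $1\le i\le \rho-1$.
   Context: Weights are Hamming weights. A coset of a linear code $C$ is a translate $u+C$; its weight is the minimum weight of its elements; the covering radius $\rho$ is the largest coset weight. $C$ is completely regular if the weight distribution of every coset depends only on the weight of that coset. $C$ is projective if a generator matrix of $C$ has no zero column and no two columns that are scalar multiples of each other. *)

(* Defs.v *)
From mathcomp Require Import all_boot all_order all_algebra all_field.
Set Implicit Arguments. Unset Strict Implicit. Unset Printing Implicit Defensive.
Import GRing.Theory.
Local Open Scope ring_scope.

(* Hamming space H(n,q) = F^n, with F a finite field (|F| = q). *)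
Section Codes.
Variables (F : finFieldType) (n : nat).

Definition wt (x : 'rV[F]_n) : nat := #|[set i : 'I_n | x 0 i != 0]|.

Definition code k (G : 'M[F]_(k, n)) : {set 'rV[F]_n} :=
  [set x : 'rV[F]_n | (x <= G)%MS].

Definition generator_matrix k (G : 'M[F]_(k, n)) : bool := row_free G.

Definition projective k (G : 'M[F]_(k, n)) : bool :=
  [forall j : 'I_n, col j G != 0] &&
  [forall j1 : 'I_n, forall j2 : 'I_n,
     (j1 != j2) ==> [forall a : F, col j1 G != a *: col j2 G]].

Definition coset (C : {set 'rV[F]_n}) (u : 'rV[F]_n) : {set 'rV[F]_n} :=
  [set u + c | c in C].

Definition cosets (C : {set 'rV[F]_n}) : {set {set 'rV[F]_n}} :=
  [set coset C u | u in [set: 'rV[F]_n]].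

(* weight of a (nonempty) set of words: minimum weight of its elements
   (all weights are <= n, so n is a neutral upper bound) *)
Definition coset_wt (D : {set 'rV[F]_n}) : nat := \big[minn/n]_(x in D) wt x.

Definition covering_radius (C : {set 'rV[F]_n}) : nat :=
  \max_(D in cosets C) coset_wt D.

Definition wdist (D : {set 'rV[F]_n}) (i : nat) : nat :=
  #|[set x in D | wt x == i]|.

Definition completely_regular (C : {set 'rV[F]_n}) : Prop :=
  forall D1 D2, D1 \in cosets C -> D2 \in cosets C ->
    coset_wt D1 = coset_wt D2 -> forall j, wdist D1 j = wdist D2 j.

Definition ncosets_wt (C : {set 'rV[F]_n}) (i : nat) : nat :=
  #|[set D in cosets C | coset_wt D == i]|.

End Codes.

(* Main.v *)
Require Import Defs.
From mathcomp Require Import all_boot all_order all_algebra all_field.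
From mathcomp Require Import zify.
Set Implicit Arguments. Unset Strict Implicit. Unset Printing Implicit Defensive.
Import GRing.Theory.

Notation z0 := (0%R : 'I_1).

Section Main.
Variables (F : finFieldType) (n : nat) (C : {set 'rV[F]_n}).
Hypothesis C0 : 0%R \in C.
Hypothesis CB : forall x y, x \in C -> y \in C -> (x - y)%R \in C.

Lemma CN x : x \in C -> (- x)%R \in C.
Proof. by move=> h; have := CB C0 h; rewrite GRing.sub0r. Qed.
Lemma CD x y : x \in C -> y \in C -> (x + y)%R \in C.
Proof. by move=> hx hy; have := CB hx (CN hy); rewrite GRing.opprK. Qed.

Lemma mem_coset x w : (w \in coset C x) = ((w - x)%R \in C).
Proof.
apply/imsetP/idP => [[c hc ->]|h]; first by rewrite GRing.addrC GRing.addKr.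
by exists (w - x)%R => //; rewrite GRing.addrC GRing.subrK.
Qed.

Lemma coset_self x : x \in coset C x.
Proof. by rewrite mem_coset GRing.subrr. Qed.

Lemma coset_eq x y : (x - y)%R \in C -> coset C x = coset C y.
Proof.
move=> h; apply/setP => w; rewrite !mem_coset.
apply/idP/idP => hw.
- by have := CD hw h; rewrite GRing.addrA GRing.subrK.
- by have := CB hw h; rewrite GRing.opprB GRing.addrA GRing.subrK.
Qed.

Lemma wt_le (x : 'rV[F]_n) : wt x <= n.
Proof. by rewrite /wt; apply: leq_trans (max_card _) _; rewrite card_ord. Qed.

Definition lev x := coset_wt (coset C x).
Definition B j x := wdist (coset C x) j.

Lemma bigmin_le (I : eqType) (r : seq I) (P : pred I) (f : I -> nat) m w :
  w \in r -> P w -> \big[minn/m]_(i <- r | P i) f i <= f w.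
Proof.
elim: r => // a r IH; rewrite inE big_cons => /orP [/eqP <- ->|hw hP].
- exact: geq_minl.
- case: ifP => _; last exact: IH.
  by apply: leq_trans (geq_minr _ _) (IH hw hP).
Qed.

Lemma lev_le x w : w \in coset C x -> lev x <= wt w.
Proof. by move=> hw; rewrite /lev /coset_wt; apply: bigmin_le => //; rewrite mem_index_enum. Qed.

Lemma lev_att x : exists2 w, w \in coset C x & wt w = lev x.
Proof.
have : (exists2 w, w \in coset C x & wt w = lev x) \/ lev x = n.
  rewrite /lev /coset_wt; apply: (big_ind (fun v => (exists2 w, w \in coset C x & wt w = v) \/ v = n)).
  - by right.
  - move=> u v hu hv; case: (leqP u v) => uv.
    + by [].
    + by [].
  - by move=> w hw; left; exists w.
case=> // h; exists x; first exact: coset_self.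
by apply/eqP; rewrite eqn_leq lev_le ?coset_self // h wt_le.
Qed.


Definition e (l : 'I_n) : 'rV[F]_n := delta_mx z0 l.
Definition nb (x : 'rV[F]_n) (p : 'I_n * F) := (x + p.2 *: e p.1)%R.
Definition pinv (p : 'I_n * F) := (p.1, - p.2)%R.

Lemma nbK x p : nb (nb x (pinv p)) p = x.
Proof. by rewrite /nb /= GRing.scaleNr GRing.addrNK. Qed.
Lemma nbK' x p : nb (nb x p) (pinv p) = x.
Proof. by rewrite /nb /= GRing.scaleNr GRing.addrK. Qed.
Lemma nbC x p q : nb (nb x p) q = nb (nb x q) p.
Proof. by rewrite /nb -!GRing.addrA (GRing.addrC (p.2 *: _)%R). Qed.
Lemma pinvK : involutive pinv.
Proof. by case=> l a; rewrite /pinv /= GRing.opprK. Qed.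

Lemma nb_coset x w p : w \in coset C x -> nb w p \in coset C (nb x p).
Proof. by rewrite !mem_coset /nb GRing.opprD GRing.addrACA GRing.subrr GRing.addr0. Qed.

Lemma wt_nb w (l : 'I_n) a :
  wt (nb w (l, a)) + ((w z0 l != 0)%R) = wt w + ((w z0 l + a != 0)%R).
Proof.
rewrite /wt /nb /= (cardsD1 l [set i | _]) (cardsD1 l [set i | (w z0 i != 0)%R]).
have -> : [set i | ((w + a *: e l) z0 i != 0)%R] :\ l = [set i | (w z0 i != 0)%R] :\ l.
  apply/setP => i; rewrite !inE !mxE; case: eqP => //= /eqP hi.
  by rewrite GRing.mulr0 GRing.addr0.
rewrite !inE !mxE !eqxx /= GRing.mulr1.
by move: (nat_of_bool _) (nat_of_bool _) #|_| => u v s; lia.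
Qed.

Lemma wt_nb_le w p : wt (nb w p) <= (wt w).+1.
Proof.
case: p => l a; have := wt_nb w l a.
by case: ((w z0 l != 0)%R); case: ((w z0 l + a != 0)%R) => /=; rewrite ?addn0 ?addn1 => h; lia.
Qed.

Lemma lev_nb1 x p : lev (nb x p) <= (lev x).+1.
Proof.
have [w hw <-] := lev_att x.
by apply: leq_trans (lev_le (nb_coset p hw)) (wt_nb_le _ _).
Qed.

Lemma lev_nb2 x p : lev x <= (lev (nb x p)).+1.
Proof. by rewrite -{1}(nbK' x p) lev_nb1. Qed.

Definition P := [set p : 'I_n * F | (p.2 != 0)%R].

Lemma pinvP p : (pinv p \in P) = (p \in P).
Proof. by rewrite !inE /= GRing.oppr_eq0. Qed.

Lemma lev_down x : 0 < lev x -> exists2 p, p \in P & lev (nb x p) = (lev x).-1.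
Proof.
have [w hw hwl] := lev_att x => hpos.
have : 0 < wt w by rewrite hwl.
rewrite /wt card_gt0 => /set0Pn [l]; rewrite inE => hl.
exists (l, - w z0 l)%R; first by rewrite inE /= GRing.oppr_eq0.
have := wt_nb w l (- w z0 l)%R; rewrite hl GRing.subrr eqxx /= addn0 addn1 => hw'.
apply/eqP; rewrite eqn_leq; apply/andP; split.
- by have := lev_le (nb_coset (l, - w z0 l)%R hw); rewrite -hwl -hw'.
- by have := lev_nb2 x (l, - w z0 l)%R; rewrite -subn1 leq_subLR add1n.
Qed.


Lemma sumc (T : finType) (Q : pred T) c : \sum_(a | Q a) c = #|[set a | Q a]| * c.
Proof. by rewrite (eq_bigl (fun a => a \in [set a | Q a])) ?sum_nat_const // => a; rewrite inE. Qed.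

Lemma bigD1n (T : finType) (Q : pred T) (f : T -> nat) x : Q x ->
  \sum_(a | Q a) f a = f x + \sum_(a | Q a && (a != x)) f a.
Proof. exact: bigD1. Qed.

Definition g w j := \sum_(p in P) (wt (nb w p) == j).
Definition Xf s j := (s.-1 == j) + (#|F|.-1.-1) * (s == j).
Definition Yf s j := (#|F|.-1) * (s.+1 == j).
Definition Gf s j := s * Xf s j + (n - s) * Yf s j.

Lemma g_coord w l j : \sum_(a : F | (a != 0)%R) (wt (nb w (l, a)) == j) =
  if (w z0 l != 0)%R then Xf (wt w) j else Yf (wt w) j.
Proof.
case: ifP => hb.
- rewrite (@bigD1n _ _ _ (- w z0 l)%R) /=; last by rewrite GRing.oppr_eq0.
  have := wt_nb w l (- w z0 l)%R; rewrite hb GRing.subrr eqxx addn0 addn1 => h1.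
  have h2 : wt (nb w (l, - w z0 l)%R) = (wt w).-1 by rewrite -h1.
  rewrite h2 (eq_bigr (fun _ => (wt w == j) : nat)); last first.
    move=> a /andP [ha hab]; have := wt_nb w l a; rewrite hb.
    have -> : (w z0 l + a != 0)%R.
      by apply: contra hab; rewrite GRing.addrC GRing.addr_eq0.
    by rewrite addn1 /= addn1 => -[->].
  rewrite sumc /Xf; congr (_ + _ * _).
  have := cardD1 (- w z0 l)%R (predC1 (0 : F)%R).
  rewrite cardC1 !inE GRing.oppr_eq0 hb /= add1n => ->.
  by apply: eq_card => a; rewrite !inE andbC.
- rewrite (eq_bigr (fun _ => ((wt w).+1 == j) : nat)); last first.
    move=> a ha; have := wt_nb w l a; move/negbT: hb; rewrite negbK => /eqP ->.
    by rewrite GRing.add0r ha eqxx addn0 addn1 => ->.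
  rewrite sumc /Yf; congr (_ * _).
  rewrite -(cardC1 (0 : F)%R); apply: eq_card => a; rewrite !inE //.
Qed.

Lemma g_val w j : g w j = Gf (wt w) j.
Proof.
have -> : g w j = \sum_(l < n) \sum_(a : F | (a != 0)%R) (wt (nb w (l, a)) == j).
  rewrite pair_big_dep /g; apply: eq_big => [[l a]|[l a] _] //; by rewrite inE.
rewrite (eq_bigr _ (fun l _ => g_coord w l j)).
rewrite (bigID (fun l => (w z0 l != 0)%R)) /=.
rewrite (eq_bigr (fun _ => Xf (wt w) j)); last by move=> l ->.
rewrite [X in _ + X](eq_bigr (fun _ => Yf (wt w) j)); last by move=> l hl; rewrite ifN.
rewrite !sumc /Gf; congr (_ * _ + _ * _).
have -> : [set l | ~~ (w z0 l != 0)%R] = ~: [set l | (w z0 l != 0)%R].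
  by apply/setP => l; rewrite !inE.
by rewrite cardsCs setCK card_ord.
Qed.


Hypothesis CR : completely_regular C.

Lemma B_eq x x' j : lev x = lev x' -> B j x = B j x'.
Proof.
by move=> h; apply: CR => //; apply/imsetP; [exists x | exists x'] => //; rewrite inE.
Qed.

Lemma wdist_sum (D : {set 'rV[F]_n}) j : wdist D j = \sum_(z in D) (wt z == j).
Proof.
rewrite /wdist -sum1_card [RHS]big_mkcond [LHS]big_mkcond /=.
by apply: eq_bigr => z _; rewrite !inE; case: (z \in D); case: (wt z == j).
Qed.

Lemma coset_shift x v : coset C (x + v)%R = [set (w + v)%R | w in coset C x].
Proof.
apply/setP => z; apply/idP/imsetP => [hz|[w hw ->]].
- exists (z - v)%R; last by rewrite GRing.subrK.
  by move: hz; rewrite !mem_coset GRing.opprD GRing.addrA GRing.addrAC.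
- by move: hw; rewrite !mem_coset GRing.opprD GRing.addrACA GRing.subrr GRing.addr0.
Qed.

Lemma sum_imset_n (A : {set 'rV[F]_n}) (h : 'rV[F]_n -> 'rV[F]_n) (f : 'rV[F]_n -> nat) :
  injective h -> \sum_(z in h @: A) f z = \sum_(w in A) f (h w).
Proof. by move=> hi; apply: big_imset => u v _ _; apply: hi. Qed.

Lemma exch_n (T1 T2 : finType) (A : {set T1}) (Bs : {set T2}) (f : T1 -> T2 -> nat) :
  \sum_(a in A) \sum_(b in Bs) f a b = \sum_(b in Bs) \sum_(a in A) f a b.
Proof. exact: exchange_big. Qed.

Definition S j x := \sum_(p in P) B j (nb x p).

Lemma S_expand j x : S j x = \sum_(w in coset C x) g w j.
Proof.
rewrite /S (eq_bigr (fun p => \sum_(w in coset C x) (wt (nb w p) == j))).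
  by rewrite exch_n.
move=> p _; rewrite /B wdist_sum /nb coset_shift sum_imset_n //.
exact: GRing.addIr.
Qed.

Lemma delta_sum N m (f : nat -> nat) : m < N -> f m = \sum_(s < N) (m == s) * f s.
Proof.
move=> hm; rewrite (bigD1 (Ordinal hm)) //= eqxx mul1n big1 ?addn0 // => s hs.
suff -> : (m == s) = false by rewrite mul0n.
by apply/negbTE; apply: contra hs => /eqP h; apply/eqP; apply: val_inj.
Qed.

Lemma S_formula j x : S j x = \sum_(s < n.+1) B s x * Gf s j.
Proof.
rewrite S_expand (eq_bigr (fun w => \sum_(s < n.+1) (wt w == s) * Gf s j)).
  rewrite exchange_big; apply: eq_bigr => s _; rewrite /B wdist_sum big_distrl /=.
  by apply: eq_bigr.
by move=> w _; rewrite g_val; apply: (delta_sum (fun s => Gf s j)); rewrite ltnS wt_le.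
Qed.

Lemma S_const j x x' : lev x = lev x' -> S j x = S j x'.
Proof. by move=> h; rewrite !S_formula; apply: eq_bigr => s _; rewrite (B_eq s h). Qed.


Definition Pc x := [set p in P | lev (nb x p) < lev x].
Definition Pa x := [set p in P | lev (nb x p) == lev x].
Definition Pb x := [set p in P | lev x < lev (nb x p)].
Definition cN x := #|Pc x|.
Definition aN x := #|Pa x|.
Definition bN x := #|Pb x|.

Lemma split3 x (f : 'I_n * F -> nat) :
  \sum_(p in P) f p = \sum_(p in Pc x) f p + \sum_(p in Pa x) f p + \sum_(p in Pb x) f p.
Proof.
rewrite [LHS]big_mkcond [in RHS]big_mkcond [X in _ + X + _]big_mkcond [X in _ + X]big_mkcond.
rewrite -!big_split /=; apply: eq_bigr => p _; rewrite !inE.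
case: (p.2 != 0%R) => //=; case: ltngtP => //= _; by rewrite ?addn0.
Qed.

Lemma total x : #|P| = cN x + aN x + bN x.
Proof. by rewrite /cN /aN /bN -!sum1_card (split3 x). Qed.

Lemma Pc_lev x p : p \in Pc x -> lev (nb x p) = (lev x).-1.
Proof.
rewrite inE => /andP [_ h]; have := lev_nb2 x p.
by move: h; case: (lev x) => // m; rewrite ltnS /= => h1 h2; apply/eqP; rewrite eqn_leq h1.
Qed.

Lemma Pb_lev x p : p \in Pb x -> lev (nb x p) = (lev x).+1.
Proof.
rewrite inE => /andP [_ h]; have := lev_nb1 x p.
by move=> h2; apply/eqP; rewrite eqn_leq h2.
Qed.

Lemma Pa_lev x p : p \in Pa x -> lev (nb x p) = lev x.
Proof. by rewrite inE => /andP [_ /eqP]. Qed.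

Lemma B_low y j : j < lev y -> B j y = 0.
Proof.
move=> h; rewrite /B wdist_sum big1 // => z hz.
by case: eqP => // hzj; move: (lev_le hz); rewrite hzj leqNgt h.
Qed.

Lemma B_pos y : 0 < B (lev y) y.
Proof.
have [w hw hwl] := lev_att y.
by rewrite /B wdist_sum (bigD1 w) //= hwl eqxx.
Qed.

Lemma ex_y0 x : exists y0, lev y0 = (lev x).-1.
Proof.
case h: (lev x) => [|m]; first by exists x.
have hp0 : 0 < lev x by rewrite h.
have [p _ hp] := lev_down hp0.
by exists (nb x p); rewrite hp h.
Qed.

Lemma sumPc x y0 j : lev y0 = (lev x).-1 ->
  \sum_(p in Pc x) B j (nb x p) = cN x * B j y0.
Proof.
move=> hy; rewrite (eq_bigr (fun _ => B j y0)) ?sum_nat_const // => p hp.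
by apply: B_eq; rewrite hy; apply: Pc_lev.
Qed.

Lemma sumPa x j : \sum_(p in Pa x) B j (nb x p) = aN x * B j x.
Proof.
rewrite (eq_bigr (fun _ => B j x)) ?sum_nat_const // => p hp.
by apply: B_eq; apply: Pa_lev.
Qed.

Lemma sumPb x j : j <= lev x -> \sum_(p in Pb x) B j (nb x p) = 0.
Proof.
move=> h; rewrite big1 // => p hp; apply: B_low; rewrite (Pb_lev hp) ltnS //.
Qed.

Lemma c_const x x' : lev x = lev x' -> cN x = cN x'.
Proof.
move=> h; case hx: (lev x) => [|m].
- have e0 : forall z, lev z = 0 -> cN z = 0.
    by move=> z hz; apply/eqP; rewrite cards_eq0; apply/eqP/setP => p; rewrite !inE hz ltn0 andbF.
  by rewrite e0 // e0 // -h.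
have [y0 hy0] := ex_y0 x.
have key : forall z, lev z = m.+1 -> S m z = cN z * B m y0.
  move=> z hz; rewrite /S (split3 z) (sumPc (y0 := y0)) ?hz ?hy0 ?hx //.
  rewrite sumPb ?hz // addn0 [X in _ + X]big1 ?addn0 // => p hp.
  by apply: B_low; rewrite (Pa_lev hp) hz.
have hpos : 0 < B m y0 by have := B_pos y0; rewrite hy0 hx.
apply/eqP; rewrite -(eqn_pmul2r hpos) -!key ?hx -?h //.
by rewrite (S_const _ h).
Qed.

Lemma a_const x x' : lev x = lev x' -> aN x = aN x'.
Proof.
move=> h; have [y0 hy0] := ex_y0 x.
have key : forall z, lev z = lev x -> S (lev x) z = cN z * B (lev x) y0 + aN z * B (lev x) x.
  move=> z hz; rewrite /S (split3 z) (sumPc (y0 := y0)) ?hz ?hy0 //.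
  by rewrite sumPb ?hz // addn0 sumPa (B_eq _ hz).
have e1 := key x erefl; have e2 := key x' (esym h).
rewrite (S_const _ h) e2 (c_const h) in e1.
move/addnI: e1 => /eqP; rewrite eqn_pmul2r ?B_pos // => /eqP //.
Qed.

Lemma b_const x x' : lev x = lev x' -> bN x = bN x'.
Proof.
move=> h; have := total x; rewrite (total x') (c_const h) (a_const h) => /eqP.
by rewrite eqn_add2l => /eqP.
Qed.


Definition lv m := #|[set x | lev x == m]|.

Lemma bsum x m : lev x = m ->
  bN x = \sum_(p : 'I_n * F) ((p \in P) && (lev (nb x p) == m.+1)).
Proof.
move=> hx; rewrite /bN -sum1_card big_mkcond; apply: eq_bigr => p _; rewrite !inE.
case: (p.2 != 0%R) => //=; have := lev_nb1 x p; rewrite hx => h.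
by rewrite eqn_leq h /=; case: (m < _).
Qed.

Lemma csum y m : lev y = m.+1 ->
  cN y = \sum_(p : 'I_n * F) ((p \in P) && (lev (nb y p) == m)).
Proof.
move=> hy; rewrite /cN -sum1_card big_mkcond; apply: eq_bigr => p _; rewrite !inE.
case: (p.2 != 0%R) => //=; have := lev_nb2 y p; rewrite hy ltnS => h.
by rewrite eqn_leq h andbT ltnS; case: (_ <= m).
Qed.

Lemma reindex_n (T : finType) (h : T -> T) (f : T -> nat) :
  injective h -> \sum_(q : T) f q = \sum_(q : T) f (h q).
Proof. by move=> hi; apply: reindex_inj. Qed.

Lemma pair_n (T1 T2 : finType) (f : T1 -> T2 -> nat) :
  \sum_(a : T1) \sum_(b : T2) f a b = \sum_(q : T1 * T2) f q.1 q.2.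
Proof. exact: pair_big. Qed.

Lemma edge m xm x1 : lev xm = m -> lev x1 = m.+1 -> lv m * bN xm = lv m.+1 * cN x1.
Proof.
move=> hxm hx1.
have L : lv m * bN xm = \sum_(x : 'rV[F]_n) \sum_(p : 'I_n * F)
    ((lev x == m) && (p \in P) && (lev (nb x p) == m.+1)).
  rewrite /lv -sumc big_mkcond; apply: eq_bigr => x _.
  case: eqP => hx /=; last by rewrite big1.
  by rewrite (b_const (x' := x)) ?hx ?hxm // (bsum hx).
have R : lv m.+1 * cN x1 = \sum_(y : 'rV[F]_n) \sum_(p : 'I_n * F)
    ((lev y == m.+1) && (p \in P) && (lev (nb y p) == m)).
  rewrite /lv -sumc big_mkcond; apply: eq_bigr => y _.
  case: eqP => hy /=; last by rewrite big1.
  by rewrite (c_const (x' := y)) ?hy ?hx1 // (csum hy).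
rewrite L R !pair_n (reindex_n _ (h := fun q => (nb q.1 q.2, pinv q.2))).
  apply: eq_bigr => [[x p]] _ /=; rewrite nbK' pinvP.
  by case: (lev _ == m); case: (p \in P); case: (lev x == _).
move=> [x p] [y r] /= hq.
have e1 := f_equal fst hq; have e2 := f_equal snd hq; simpl in e1, e2.
have e3 : p = r by rewrite -(pinvK p) e2 pinvK.
by rewrite -e3 in e1; rewrite -(nbK' x p) e1 nbK' e3.
Qed.


Lemma mono_b y p0 : lev (nb y p0) = (lev y).+1 -> bN (nb y p0) <= bN y.
Proof.
move=> h; apply: subset_leq_card; apply/subsetP => q; rewrite !inE => /andP [hq hl].
rewrite hq /=; have := lev_nb1 (nb y q) p0; rewrite -nbC => h2.
by move: hl; rewrite h => hl; have := leq_trans hl h2; rewrite ltnS.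
Qed.

Lemma mono_c y p0 : lev (nb y p0) = (lev y).+1 -> cN y <= cN (nb y p0).
Proof.
move=> h; apply: subset_leq_card; apply/subsetP => q; rewrite !inE => /andP [hq hl].
rewrite hq /=; have := lev_nb1 (nb y q) p0; rewrite -nbC h => h2.
by apply: leq_ltn_trans h2 _; rewrite ltnS.
Qed.

Lemma loglev i : 1 <= i -> lv i.-1 * lv i.+1 <= lv i ^ 2.
Proof.
move=> hi; case: (posnP (lv i.+1)) => [->|]; first by rewrite muln0.
rewrite card_gt0 => /set0Pn [x1]; rewrite inE => /eqP hx1.
have h1pos : 0 < lev x1 by rewrite hx1.
have [p1 hp1 hx0] := lev_down h1pos; rewrite hx1 /= in hx0.
set x0 := nb x1 p1 in hx0.
have [p0 hp0 hxm] := lev_down (leq_trans hi (eq_leq (esym hx0))).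
set xm := nb x0 p0 in hxm; rewrite hx0 in hxm.
have hi' : (i.-1).+1 = i by rewrite prednK.
have ex0 : x0 = nb xm (pinv p0) by rewrite nbK'.
have ex1 : x1 = nb x0 (pinv p1) by rewrite /x0 nbK'.
have E1 := edge (xm := xm) (x1 := x0) hxm (etrans hx0 (esym hi')).
have E2 := edge (xm := x0) (x1 := x1) hx0 hx1.
have M1 : bN x0 <= bN xm by rewrite ex0; apply: mono_b; rewrite -ex0 hx0 hxm hi'.
have M2 : cN x0 <= cN x1 by rewrite ex1; apply: mono_c; rewrite -ex1 hx0 hx1.
have P1 : 0 < bN xm.
  rewrite card_gt0; apply/set0Pn; exists (pinv p0); rewrite inE pinvP hp0 /= -ex0 hx0 hxm.
  by rewrite -{2}hi'.
have P2 : 0 < cN x1.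
  rewrite card_gt0; apply/set0Pn; exists p1; rewrite inE hp1 /= -/x0 hx0 hx1 //.
rewrite hi' in E1; rewrite -(@leq_pmul2r (bN xm * cN x1)) ?muln_gt0 ?P1 ?P2 // mulnACA E1 -E2 mulnACA.
by rewrite expnS expn1 leq_mul2l [cN x0 * _]mulnC leq_mul ?orbT.
Qed.


Lemma part_n (I J : finType) (Pi : pred I) (p : I -> J) (Q : pred J) (f : I -> nat) :
  (forall i, Pi i -> Q (p i)) ->
  \sum_(i | Pi i) f i = \sum_(j | Q j) \sum_(i | Pi i && (p i == j)) f i.
Proof. exact: partition_big. Qed.

Lemma coset_memE u x : (coset C x == coset C u) = (x \in coset C u).
Proof.
apply/eqP/idP => [<-|h]; first exact: coset_self.
by apply: coset_eq; rewrite -mem_coset.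
Qed.

Lemma lv_d m : lv m = ncosets_wt C m * #|C|.
Proof.
have -> : lv m = \sum_(x | lev x == m) 1 by rewrite /lv -sum1_card; apply: eq_bigl => x; rewrite inE.
rewrite (@part_n _ _ _ (fun x => coset C x) (fun D => D \in [set D in cosets C | coset_wt D == m])).
  rewrite (eq_bigr (fun _ => #|C|)).
    rewrite sumc /ncosets_wt; congr (_ * _); apply: eq_card => D; rewrite !inE //.
  move=> D; rewrite inE => /andP [/imsetP [u _ ->] hw].
  rewrite (eq_bigl (fun x => x \in coset C u)) ?sum1_card.
    by rewrite /coset card_imset //; apply: GRing.addrI.
  move=> x /=; rewrite coset_memE; apply/andP/idP => [[]//|h]; split => //.
  by move: h; rewrite -coset_memE => /eqP; rewrite /lev => ->.
move=> x hx; rewrite inE hx andbT; apply/imsetP; exists x => //; rewrite inE.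
Qed.

End Main.

Theorem corollary5 (F : finFieldType) (n k : nat) (G : 'M[F]_(k, n)) :
  generator_matrix G -> projective G -> completely_regular (code G) ->
  forall i : nat, 1 <= i <= (covering_radius (code G)).-1 ->
    ncosets_wt (code G) i.-1 * ncosets_wt (code G) i.+1
      <= ncosets_wt (code G) i ^ 2.
Proof.
move=> _ _ hCR i /andP [hi _].
have C0 : 0%R \in code G by rewrite inE sub0mx.
have CB : forall x y, x \in code G -> y \in code G -> (x - y)%R \in code G.
  by move=> x y; rewrite !inE => hx hy; rewrite addmx_sub ?eqmx_opp.
have hC : 0 < #|code G| by rewrite card_gt0; apply/set0Pn; exists 0%R.
have := loglev C0 hCR hi; rewrite !(lv_d C0 CB).
by rewrite mulnACA expnMn mulnn leq_pmul2r // expn_gt0 hC.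
Qed.
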